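(* Let $a,b,g,m,n>0$ and $0<e<1$, and consider the planar system $$\dot x=a-ex-\frac{xy}{1+gy},\qquad \dot y=\frac{xy}{1+gy}-y-\frac{my}{b+ny}.$$ Let $a_1=(eg+1)n$, $a_2=(b+m)(eg+1)+n(e-a)$, and $$a_4=\frac{[en-(b-m)(eg+1)]+\sqrt{4m(eg+1)[ne-b(eg+1)]}}{n}.$$ Suppose $n>\frac{(eg+1)b^2+m(eg+1)b}{me}$ and $a=a_4$. Let $y_3=-\frac{a_2}{2a_1}$ and $x_3=\frac{a(1+gy_3)}{e+(eg+1)y_3}$, so that $E_3=(x_3,y_3)$ is an endemic equilibrium of the system. Then $E_3$ is degenerate, i.e. the determinant of the Jacobian matrix of the system at $E_3$ is zero.
   Context: The system is a rescaled SIR epidemic model with saturated infection rate and saturated treatment rate. *)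

(* Defs.v *)
From Stdlib Require Import Reals.
From Coquelicot Require Import Coquelicot.
Open Scope R_scope.

Definition fx (a e g : R) (x y : R) : R := a - e * x - x * y / (1 + g * y).
Definition fy (b g m n : R) (x y : R) : R :=
  x * y / (1 + g * y) - y - m * y / (b + n * y).

Definition J11 a e g x y := Derive (fun u => fx a e g u y) x.
Definition J12 a e g x y := Derive (fun v => fx a e g x v) y.
Definition J21 b g m n x y := Derive (fun u => fy b g m n u y) x.
Definition J22 b g m n x y := Derive (fun v => fy b g m n x v) y.

Definition jac_det (a b e g m n x y : R) : R :=
  J11 a e g x y * J22 b g m n x y - J12 a e g x y * J21 b g m n x y.

Definition a1 (e g n : R) : R := (e * g + 1) * n.
Definition a2 (a b e g m n : R) : R := (b + m) * (e * g + 1) + n * (e - a).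
Definition a4 (b e g m n : R) : R :=
  ((e * n - (b - m) * (e * g + 1)) + sqrt (4 * m * (e * g + 1) * (n * e - b * (e * g + 1)))) / n.

(* Main.v *)
Require Import Defs.
From Stdlib Require Import Reals Lra Psatz.
From Coquelicot Require Import Coquelicot.
Open Scope R_scope.

Lemma J11_eq a e g x y : 1 + g*y <> 0 -> J11 a e g x y = - e - y/(1+g*y).
Proof. intros H. unfold J11, fx. apply is_derive_unique. auto_derive; [auto| field; auto]. Qed.
Lemma J12_eq a e g x y : 1 + g*y <> 0 -> J12 a e g x y = - x/(1+g*y)^2.
Proof. intros H. unfold J12, fx. apply is_derive_unique. auto_derive; [auto| field; auto]. Qed.
Lemma J21_eq b g m n x y : 1 + g*y <> 0 -> b + n*y <> 0 -> J21 b g m n x y = y/(1+g*y).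
Proof. intros H H'. unfold J21, fy. apply is_derive_unique. auto_derive; [tauto| field; auto]. Qed.
Lemma J22_eq b g m n x y : 1 + g*y <> 0 -> b + n*y <> 0 -> J22 b g m n x y = x/(1+g*y)^2 - 1 - m*b/(b+n*y)^2.
Proof. intros H H'. unfold J22, fy. apply is_derive_unique. auto_derive; [tauto| field; auto]. Qed.

Lemma det_zero a b e g m n y : 0 < e -> 1 + g*y <> 0 -> b + n*y <> 0 -> e + (e*g+1)*y <> 0 ->
  a = (e + (e*g+1)*y)^2 * ((b+n*y)^2 + m*b) / (e*(b+n*y)^2) ->
  jac_det a b e g m n (a * (1 + g * y) / (e + (e * g + 1) * y)) y = 0.
Proof.
  intros He Hp Hr Hq Ha. unfold jac_det.
  rewrite J11_eq, J12_eq, J21_eq, J22_eq by auto.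
  subst a. field. repeat split; auto; lra.
Qed.

Lemma alg (e n k b m r u : R) : u = e*n - k*b -> m*u = k*r^2 -> u <> 0 ->
  e*n*r^2*(u+k*m+2*k*r) = (u+k*r)^2*(r^2+m*b).
Proof.
  intros HE HC Hu.
  assert (H : u*(e*n*r^2*(u+k*m+2*k*r) - (u+k*r)^2*(r^2+m*b)) =
    (m*u - k*r^2)*(e*n*r^2*k - (u+k*r)^2*b) - (u - e*n + k*b)*(u+k*r)^2*r^2) by ring.
  rewrite HC, HE in H. replace (k * r ^ 2 - k * r ^ 2) with 0 in H by ring.
  replace (e * n - k * b - e * n + k * b) with 0 in H by ring.
  rewrite Rmult_0_l, Rmult_0_l, Rmult_0_l, Rminus_0_r in H.
  rewrite HE; apply Rmult_integral in H. destruct H as [H|H]; [rewrite <- HE in H; contradiction|lra].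
Qed.

Theorem theorem2p2 (a b e g m n : R) :
  0 < a -> 0 < b -> 0 < g -> 0 < m -> 0 < n -> 0 < e -> e < 1 ->
  n > ((e * g + 1) * b ^ 2 + m * (e * g + 1) * b) / (m * e) ->
  a = a4 b e g m n ->
  let y3 := - a2 a b e g m n / (2 * a1 e g n) in
  let x3 := a * (1 + g * y3) / (e + (e * g + 1) * y3) in
  jac_det a b e g m n x3 y3 = 0.
Proof.
  intros Ha Hb Hg Hm Hn He He1 Hn2 Ha4 y3 x3.
  set (k := e*g+1).
  assert (Hk : 1 < k) by (unfold k; nra).
  assert (Hn3 : n * (m*e) > k*b^2 + m*k*b).
  { apply Rmult_gt_compat_r with (r := m*e) in Hn2; [|nra].
    unfold Rdiv in Hn2. rewrite Rmult_assoc, Rinv_l in Hn2 by nra. unfold k; lra. }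
  set (D := 4 * m * k * (n * e - b * k)).
  assert (HD : (2*b*k)^2 < D) by (unfold D; nra).
  set (s := sqrt D).
  assert (Hs2 : s*s = D) by (apply sqrt_sqrt; nra).
  assert (Hs : 2*b*k < s).
  { unfold s. rewrite <- (sqrt_pow2 (2*b*k)) by nra. apply sqrt_lt_1; nra. }
  assert (Han : a * n = e*n - (b-m)*k + s).
  { rewrite Ha4. unfold a4. fold k. fold D s. field. lra. }
  assert (Hy : y3 = (s - 2*b*k)/(2*k*n)).
  { unfold y3, a2, a1. fold k. apply Rmult_eq_reg_l with n; [|lra].
    field_simplify; [|lra|lra]. rewrite (Rmult_comm n a), Han. field; lra. }
  assert (Hy0 : 0 < y3) by (rewrite Hy; apply Rdiv_lt_0_compat; nra).
  assert (Hr : b + n*y3 = s/(2*k)) by (rewrite Hy; field; lra).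
  assert (Hq : e + k*y3 > 0) by nra.
  assert (Hp : 1 + g*y3 > 0) by nra.
  assert (Hr0 : b + n*y3 > 0) by nra.
  unfold x3. apply det_zero; fold k; try lra.
  set (r := b + n*y3). set (u := e*n - k*b).
  assert (Hu : u > 0) by (unfold u; nra).
  assert (HC : m*u = k*r^2).
  { unfold r. rewrite Hr. apply Rmult_eq_reg_l with (4*k); [|lra].
    replace (4*k*(k*(s/(2*k))^2)) with (s*s) by (field; lra). rewrite Hs2. unfold D, u. ring. }
  assert (Hal := alg e n k b m r u eq_refl HC ltac:(lra)).
  assert (Hsr : s = 2*k*r) by (unfold r; rewrite Hr; field; lra).
  assert (Hqr : e + k*y3 = (u + k*r)/n) by (unfold u, r; field; lra).
  assert (Har : a = (u + k*m + 2*k*r)/n) by (apply Rmult_eq_reg_r with n; [|lra]; rewrite Han, Hsr; unfold u; field; lra).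
  rewrite Hqr, Har. fold r.
  apply Rmult_eq_reg_l with (e*n^2*r^2); [|apply Rgt_not_eq; apply Rmult_lt_0_compat; [apply Rmult_lt_0_compat|]; nra].
  assert (Hn0 : n <> 0) by (apply Rgt_not_eq; lra). assert (Hrr : r <> 0) by (apply Rgt_not_eq; unfold r; lra). assert (He0 : e <> 0) by (apply Rgt_not_eq; lra).
  field_simplify; try tauto.
  ring_simplify in Hal. lra.
Qed.
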